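(* Let $\mathcal{F}$ and $\mathcal{G}$ be uniform sheaves over $\mathcal{B}$, let $\mathcal{F}'\subset\mathcal{F}$ be a dense subsheaf, and suppose $\mathcal{G}$ is complete. Then every uniformly continuous morphism $f:\mathcal{F}'\to\mathcal{G}$ extends uniquely to a uniformly continuous morphism $\tilde f:\mathcal{F}\to\mathcal{G}$.
   Context: $\mathcal{W}$ is a quasi-separated (fs log) adic space locally of finite type over a finite extension $K$ of $\mathbb{Q}_p$, and $\mathcal{B}$ is a basis of the big pro-Kummer-étale site $(Rig/\mathcal{W})_{proket}$ consisting of log affinoid perfectoid objects. A Hausdorff topological sheaf on $\mathcal{B}$ is a functor $\mathcal{B}^{op}\to$ (Hausdorff topological spaces) such that $\mathcal{F}(U\sqcup V)=\mathcal{F}(U)\times\mathcal{F}(V)$ and for every truncated finite hypercover $\{V^2_j\}\to\{V^1_i\}\to V$ in $\mathcal{B}$ the diagram $\mathcal{F}(V)\to\prod_i\mathcal{F}(V^1_i)\rightrightarrows\prod_j\mathcal{F}(V^2_j)$ is an equalizer of topological spaces. It is a uniform sheaf if all $\mathcal{F}(V)$ are uniform spaces, complete if all $\mathcal{F}(V)$ are complete; a morphism is uniformly continuous if each $f(V)$ is; a subsheaf $\mathcal{F}'\subset\mathcal{F}$ is dense if $\mathcal{F}'(V)$ is dense in $\mathcal{F}(V)$ for all $V\in\mathcal{B}$. *)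

(* Defs.v *)
From HB Require Import structures.
From mathcomp Require Import all_boot all_order all_algebra.
From mathcomp Require Import all_classical all_reals all_analysis.
Set Implicit Arguments. Unset Strict Implicit. Unset Printing Implicit Defensive.
Import Order.TTheory GRing.Theory Num.Theory.
Local Open Scope classical_set_scope.

(** An abstract site playing the role of the basis B: a category with
    chosen binary disjoint unions (coproducts) and a designated class of
    truncated finite hypercovers.  Morphisms are composed as [comp g f] = g o f. *)

(** Data of a truncated finite hypercover {V2_j} -> {V1_i} -> V :
    n1 objects V1 i with maps to V, n2 objects V2 j each mapping to
    two of the V1's (V2_j covers the fibre products V1_{s j} x_V V1_{t j}). *)
Record hc_data (ob : Type) (hom : ob -> ob -> Type) := HcData {
  hc_base : ob;
  hc_n1 : nat;
  hc_V1 : 'I_hc_n1 -> ob;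
  hc_a : forall i, hom (hc_V1 i) hc_base;
  hc_n2 : nat;
  hc_V2 : 'I_hc_n2 -> ob;
  hc_s : 'I_hc_n2 -> 'I_hc_n1;
  hc_t : 'I_hc_n2 -> 'I_hc_n1;
  hc_p1 : forall j, hom (hc_V2 j) (hc_V1 (hc_s j));
  hc_p2 : forall j, hom (hc_V2 j) (hc_V1 (hc_t j))
}.
Arguments hc_base {ob hom}.
Arguments hc_n1 {ob hom}.
Arguments hc_V1 {ob hom}.
Arguments hc_a {ob hom}.
Arguments hc_n2 {ob hom}.
Arguments hc_V2 {ob hom}.
Arguments hc_s {ob hom}.
Arguments hc_t {ob hom}.
Arguments hc_p1 {ob hom}.
Arguments hc_p2 {ob hom}.

Record site := Site {
  ob : Type;
  hom : ob -> ob -> Type;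
  idc : forall U, hom U U;
  comp : forall U V W, hom V W -> hom U V -> hom U W;
  comp_id_l : forall U V (f : hom U V), comp (idc V) f = f;
  comp_id_r : forall U V (f : hom U V), comp f (idc U) = f;
  comp_assoc : forall U V W X (h : hom W X) (g : hom V W) (f : hom U V),
      comp h (comp g f) = comp (comp h g) f;
  dunion : ob -> ob -> ob;
  inj_l : forall U V, hom U (dunion U V);
  inj_r : forall U V, hom V (dunion U V);
  is_hypercover : hc_data hom -> Prop
}.
Arguments hom : clear implicits.
Arguments idc : clear implicits.
Arguments comp : clear implicits.
Arguments dunion : clear implicits.
Arguments inj_l : clear implicits.
Arguments inj_r : clear implicits.
Arguments comp s {U V W}.
Arguments is_hypercover : clear implicits.

Record upresheaf (B : site) := UPresheaf {
  sec : ob B -> uniformType;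
  res : forall U V, hom B U V -> sec V -> sec U;
  res_id : forall U (x : sec U), res (idc B U) x = x;
  res_comp : forall U V W (g : hom B V W) (f : hom B U V) (x : sec W),
      res (comp B g f) x = res f (res g x);
  res_cont : forall U V (f : hom B U V), continuous (res f)
}.
Arguments sec {B}.
Arguments res {B} u {U V}.

(** Sheaf conditions (as an equalizer / product of topological spaces) for a
    sub-presheaf [S] of [F], where [S V] carries the subspace topology of
    [F V].  Taking [S := fun _ => setT] gives the sheaf conditions for [F]
    itself.  "Homeomorphism onto the product / equalizer" is stated as:
    bijectivity onto it, plus the topology of [S V] being the initial topology
    for the (finitely many) restriction maps. *)
Definition is_subsheaf (B : site) (F : upresheaf B) (S : forall V, set (sec F V)) :=
  (forall U V (f : hom B U V) x, S V x -> S U (res F f x)) /\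
  (* F(U ⊔ V) = F(U) × F(V) as topological spaces *)
  (forall U V,
     (forall a b, S U a -> S V b ->
        exists x, [/\ S (dunion B U V) x, res F (inj_l B U V) x = a
                   & res F (inj_r B U V) x = b]) /\
     (forall x y, S (dunion B U V) x -> S (dunion B U V) y ->
        res F (inj_l B U V) x = res F (inj_l B U V) y ->
        res F (inj_r B U V) x = res F (inj_r B U V) y -> x = y) /\
     (forall x (N : set (sec F (dunion B U V))), S _ x -> nbhs x N ->
        exists N1 N2, [/\ nbhs (res F (inj_l B U V) x) N1,
                          nbhs (res F (inj_r B U V) x) N2 &
          forall y, S _ y -> N1 (res F (inj_l B U V) y) ->
                    N2 (res F (inj_r B U V) y) -> N y])) /\
  (* equalizer condition for every truncated finite hypercover *)
  (forall h : hc_data (hom B), is_hypercover B h ->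
     (forall s : forall i, sec F (hc_V1 h i),
        (forall i, S _ (s i)) ->
        (forall j, res F (hc_p1 h j) (s (hc_s h j)) = res F (hc_p2 h j) (s (hc_t h j))) ->
        exists x, S (hc_base h) x /\ forall i, res F (hc_a h i) x = s i) /\
     (forall x y, S (hc_base h) x -> S (hc_base h) y ->
        (forall i, res F (hc_a h i) x = res F (hc_a h i) y) -> x = y) /\
     (forall x (N : set (sec F (hc_base h))), S _ x -> nbhs x N ->
        exists Ns : forall i, set (sec F (hc_V1 h i)),
          (forall i, nbhs (res F (hc_a h i) x) (Ns i)) /\
          forall y, S _ y -> (forall i, Ns i (res F (hc_a h i) y)) -> N y)).

Definition is_usheaf (B : site) (F : upresheaf B) :=
  (forall V, hausdorff_space (sec F V)) /\ is_subsheaf (fun V : ob B => [set: sec F V]).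

Definition complete_space (T : uniformType) :=
  forall Fl : set_system T, ProperFilter Fl -> cauchy Fl -> exists x : T, Fl --> x.

Definition is_complete_usheaf (B : site) (F : upresheaf B) :=
  forall V, complete_space (sec F V).

Definition dense_subsheaf (B : site) (F : upresheaf B) (S : forall V, set (sec F V)) :=
  is_subsheaf S /\ forall V, dense (S V).

Definition unif_continuous_on (T T' : uniformType) (A : set T) (f : T -> T') :=
  forall E, entourage E -> exists2 D, entourage D &
    forall x y, A x -> A y -> D (x, y) -> E (f x, f y).

(** A uniformly continuous morphism from the subsheaf [S] of [F] to [G]
    (components are given as total functions, only their values on [S V]
    matter). *)
Definition unif_morph_on (B : site) (F G : upresheaf B)
    (S : forall V, set (sec F V)) (f : forall V, sec F V -> sec G V) :=
  (forall U V (g : hom B U V) x, S V x -> f U (res F g x) = res G g (f V x)) /\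
  (forall V, unif_continuous_on (S V) (f V)).

Definition unif_morph (B : site) (F G : upresheaf B)
    (f : forall V, sec F V -> sec G V) :=
  (forall U V (g : hom B U V) x, f U (res F g x) = res G g (f V x)) /\
  (forall V, unif_continuous (f V)).

(* Main.v *)
Require Import Defs.
From HB Require Import structures.
From mathcomp Require Import all_boot all_order all_algebra.
From mathcomp Require Import all_classical all_reals all_analysis.
Local Open Scope classical_set_scope.

Lemma nbhs_ent {T : uniformType} (x : T) {E : set (T * T)} :
  entourage E -> nbhs x [set y | E (x, y)].
Proof.
move=> eE; apply: filterS (nbhs_entourage x eE) => y /xsectionP //.
Qed.

Lemma within_of {T : topologicalType} (A : set T) {x : T} {P : set T} :
  nbhs x P -> within A (nbhs x) P.
Proof. by move=> nP; apply: filterS nP => y Py _. Qed.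

Lemma dense_proper {T : topologicalType} {A : set T} (x : T) :
  dense A -> ProperFilter (within A (nbhs x)).
Proof.
move=> dA; apply: within_nbhs_proper => B nB.
have [|y [/= By Ay]] := dA (B°) _ (@open_interior _ B).
  by exists x; exact: nB.
by exists y; split => //; exact: interior_subset.
Qed.

Lemma unif_cont_cont (T T' : uniformType) (g : T -> T') :
  unif_continuous g -> continuous g.
Proof.
move=> ug x N /nbhsP [E eE sEN].
have /= eD := ug _ eE.
move: eD; rewrite nbhs_filterE => eD.
have eD' : entourage [set xy | E (g xy.1, g xy.2)] := eD.
change (nbhs x (g @^-1` N)).
apply: (filterS _ (nbhs_ent x eD')) => y /= Exy.
by apply: sEN; apply/xsectionP.
Qed.

Section Ext.
Context {T T' : uniformType} (A : set T) (f : T -> T').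
Hypothesis hT' : hausdorff_space T'.
Hypothesis cT' : complete_space T'.
Hypothesis dA : dense A.
Hypothesis uf : unif_continuous_on A f.

Lemma ext_cauchy (x : T) : cauchy (f @ within A (nbhs x)).
Proof.
move=> E; rewrite nbhs_filterE => eE.
have [D eD HD] := uf _ eE.
pose D2 := split_ent D.
have eD2 : entourage D2 by exact: entourage_split_ent.
exists ([set z | exists y, [/\ A y, D2 (y, x) & z = f y]],
        [set z | exists y, [/\ A y, D2 (x, y) & z = f y]]).
  split.
  - apply: (filterS _ (nbhs_ent x (entourage_inv eD2))) => y /= Dy Ay.
    by exists y.
  - apply: (filterS _ (nbhs_ent x eD2)) => y /= Dy Ay.
    by exists y.
move=> [z1 z2] [/= [y1 [Ay1 Dy1 ->]] [y2 [Ay2 Dy2 ->]]].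
by apply: HD => //; apply: (entourage_split x eD).
Qed.

Lemma ext_ex (x : T) : exists y : T', f @ within A (nbhs x) --> y.
Proof.
apply: cT'; last exact: ext_cauchy.
exact: fmap_proper_filter (dense_proper x dA).
Qed.

Definition ext (x : T) : T' := projT1 (cid (ext_ex x)).

Lemma ext_cvg (x : T) : f @ within A (nbhs x) --> ext x.
Proof. exact: (projT2 (cid (ext_ex x))). Qed.

Lemma ext_eq (x : T) : A x -> ext x = f x.
Proof.
move=> Ax; have PF := fmap_proper_filter f (dense_proper x dA).
apply: (cvg_unique hT' (F := f @ within A (nbhs x))); first exact: ext_cvg.
apply/cvg_entourageP => E eE.
have [D eD HD] := uf _ eE.
apply: (filterS _ (nbhs_ent x eD)) => y /= Dy Ay.
exact: HD.
Qed.

Lemma ext_uniq (g : T -> T') : continuous g -> (forall x, A x -> g x = f x) ->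
  forall x, g x = ext x.
Proof.
move=> hg geq x; have PF := fmap_proper_filter f (dense_proper x dA).
apply: (cvg_unique hT' (F := f @ within A (nbhs x))); last exact: ext_cvg.
move=> N nN.
have H : nbhs x (g @^-1` N) := hg x N nN.
change (nbhs x [set y | A y -> N (f y)]).
apply: (filterS _ H) => y /= Ny Ay.
by rewrite -geq.
Qed.

Lemma ext_unif : unif_continuous ext.
Proof.
move=> E; rewrite !nbhs_filterE => eE.
change (entourage [set xy | E (ext xy.1, ext xy.2)]).
pose E1 := split_ent E; pose E2 := split_ent E1.
have eE1 : entourage E1 by exact: entourage_split_ent.
have eE2 : entourage E2 by exact: entourage_split_ent.
have [D eD HD] := uf _ eE2.
pose D1 := split_ent D; pose D2 := split_ent D1.
have eD1 : entourage D1 by exact: entourage_split_ent.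
have eD2 : entourage D2 by exact: entourage_split_ent.
apply: (filterS _ eD2) => -[x y] /= Dxy.
have PFx := dense_proper x dA.
have PFy := dense_proper y dA.
have [x' [Ax' Dx' Ex']] : exists x', [/\ A x', D2 (x', x) & E2 (ext x, f x')].
  apply: (filter_ex (F := within A (nbhs x))).
  have h1 : within A (nbhs x) [set t | E2 (ext x, f t)].
    exact: (cvg_entourage (ext_cvg x) eE2).
  have h2 := within_of A (nbhs_ent x (entourage_inv eD2)).
  have h3 := withinT A (nbhs_filter x).
  apply: (filterS _ (filterI h3 (filterI h2 h1))) => t [At [Dt Et]].
  by split.
have [y' [Ay' Dy' Ey']] : exists y', [/\ A y', D2 (y, y') & E2 (f y', ext y)].
  apply: (filter_ex (F := within A (nbhs y))).
  have h1 : within A (nbhs y) [set t | E2 (f t, ext y)].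
    exact: (cvg_entourage (ext_cvg y) (entourage_inv eE2)).
  have h2 := within_of A (nbhs_ent y eD2).
  have h3 := withinT A (nbhs_filter y).
  apply: (filterS _ (filterI h3 (filterI h2 h1))) => t [At [Dt Et]].
  by split.
have Dxy' : D (x', y').
  apply: (entourage_split y eD).
    exact: (entourage_split x eD1 Dx' Dxy).
  by apply: (split_ent_subset eD1); exact: Dy'.
have Exy' := HD _ _ Ax' Ay' Dxy'.
apply: (entourage_split (f y') eE).
  exact: (entourage_split (f x') eE1 Ex' Exy').
by apply: (split_ent_subset eE1); exact: Ey'.
Qed.

End Ext.

Lemma ext_nat {T1 T2 T1' T2' : uniformType} (A1 : set T1) (A2 : set T2)
  (f1 : T1 -> T1') (f2 : T2 -> T2') (h1 : hausdorff_space T1') c1 d1 u1 c2 d2 u2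
  (r : T2 -> T1) (s : T2' -> T1') : continuous r -> continuous s ->
  (forall y, A2 y -> A1 (r y)) -> (forall y, A2 y -> f1 (r y) = s (f2 y)) ->
  forall x, @ext _ _ A1 f1 c1 d1 u1 (r x) = s (@ext _ _ A2 f2 c2 d2 u2 x).
Proof.
move=> hr hs hA hf x.
have PF := fmap_proper_filter (fun y => s (f2 y)) (dense_proper x d2).
apply: (cvg_unique h1 (F := (fun y => s (f2 y)) @ within A2 (nbhs x))).
- move=> N nN.
  have := ext_cvg A1 f1 c1 d1 u1 (r x) N nN.
  move=> H.
  have H' : nbhs (r x) [set z | A1 z -> N (f1 z)] := H.
  have H2 : nbhs x (r @^-1` [set z | A1 z -> N (f1 z)]) := hr x _ H'.
  change (nbhs x [set y | A2 y -> N (s (f2 y))]).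
  apply: (filterS _ H2) => y /= Hy Ay.
  rewrite -hf //; exact: Hy (hA _ Ay).
- move=> N nN.
  exact: (ext_cvg A2 f2 c2 d2 u2 x _ (hs _ N nN)).
Qed.


Theorem lemma2p28 (B : site) (F G : upresheaf B)
  (S : forall V, set (sec F V)) (f : forall V, sec F V -> sec G V) :
  is_usheaf F -> is_usheaf G -> is_complete_usheaf G ->
  dense_subsheaf S -> unif_morph_on S f ->
  exists ft : forall V, sec F V -> sec G V,
    [/\ unif_morph ft, (forall V x, S V x -> ft V x = f V x) &
      forall g : forall V, sec F V -> sec G V,
        unif_morph g -> (forall V x, S V x -> g V x = f V x) ->
        forall V x, g V x = ft V x].
Proof.
move=> _ [hG _] cG [[Sres _] dS] [fnat fu].
pose ft V := ext (S V) (f V) (cG V) (dS V) (fu V).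
exists ft; split.
- split.
  + move=> U V g x.
    have := (@ext_nat _ _ _ _ (S U) (S V) (f U) (f V) (hG U) (cG U) (dS U) (fu U)
      (cG V) (dS V) (fu V) (res F g) (res G g) (@res_cont B F U V g) (@res_cont B G U V g)
      (fun y => Sres _ _ g y) (fun y Sy => fnat _ _ g y Sy) x). by rewrite /ft => ->.
  + move=> V; exact: ext_unif.
- move=> V x Sx; exact: (ext_eq _ _ (hG V) _ _ _ _ Sx).
- move=> g [_ gu] geq V x.
  apply: (ext_uniq _ _ (hG V)); first exact: unif_cont_cont.
  exact: geq.
Qed.
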